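(* Let $\mathbb{T}$ be a geometric theory over $\Sigma$. Then $\mathbf{M}_{\mathbb{T}}=(I_{\mathbb{T}}\rightrightarrows M_{\mathbb{T}})$ is a topological groupoid: the domain and codomain maps $d,c:I_{\mathbb{T}}\to M_{\mathbb{T}}$, the composition map $m:I_{\mathbb{T}}\times_{M_{\mathbb{T}}}I_{\mathbb{T}}\to I_{\mathbb{T}}$, the identity map $e:M_{\mathbb{T}}\to I_{\mathbb{T}}$ and the inverse map $i:I_{\mathbb{T}}\to I_{\mathbb{T}}$ are all continuous.
   Context: Let $\Sigma$ be a single-sorted first-order signature with equality, $\kappa\geq|\Sigma|+\aleph_0$ an infinite cardinal, and $\mathbb{S}$ a fixed set of cardinality at least $\kappa$. An $\mathbb{S}$-indexed $\Sigma$-structure is one whose underlying set is a quotient $A/{\sim}$ of a subset $A\subseteq\mathbb{S}$ (elements $[a]$). $M_\Sigma$ is the set of all such structures and $I_\Sigma$ the set of all isomorphisms between them, with domain and codomain maps $d,c$. The logical topology on $M_\Sigma$ is the coarsest containing the sets $\{\mathbf{M}:[a]\in\mathbf{M}\}$ ($a\in\mathbb{S}$), $\{\mathbf{M}:[\mathbf{a}]\in R^{\mathbf{M}}\}$ (each $n$-ary relation symbol $R$ including equality and nullary symbols), and $\{\mathbf{M}:f^{\mathbf{M}}([\mathbf{a}])=[b]\}$ (each function symbol $f$). The logical topology on $I_\Sigma$ is the coarsest making $d,c$ continuous and containing all $\{\mathbf{f}:[a]\in d(\mathbf{f}),[b]\in c(\mathbf{f}),\mathbf{f}([a])=[b]\}$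 ($a,b\in\mathbb{S}$). $M_{\mathbb{T}}\subseteq M_\Sigma$ is the set of $\mathbb{S}$-indexed $\mathbb{T}$-models and $I_{\mathbb{T}}\subseteq I_\Sigma$ the set of isomorphisms between them, with subspace topologies (the fibre product $I_{\mathbb{T}}\times_{M_{\mathbb{T}}}I_{\mathbb{T}}$ with its subspace-of-product topology). *)

(* Defs.v *)
From HB Require Import structures.
From mathcomp Require Import all_boot all_classical all_reals.
From mathcomp Require Import topology.

Set Implicit Arguments.
Set Strict Implicit.
Unset Printing Implicit Defensive.

Local Open Scope classical_set_scope.

(* Single-sorted first-order signatures (equality is built in).             *)
Record signature := Signature {
  funsym : Type;
  farity : funsym -> nat;
  relsym : Type;
  rarity : relsym -> nat
}.
Arguments farity {s} f.
Arguments rarity {s} R.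

Definition card_geq (A B : Type) : Prop := exists f : B -> A, injective f.

Section Syntax.
Variable sg : signature.

Inductive term : Type :=
  | TVar : nat -> term
  | TApp : forall f : funsym sg, ('I_(farity f) -> term) -> term.

Inductive gformula : Type :=
  | GTop : gformula
  | GEq : term -> term -> gformula
  | GRel : forall R : relsym sg, ('I_(rarity R) -> term) -> gformula
  | GAnd : gformula -> gformula -> gformula
  | GOr : forall I : Type, (I -> gformula) -> gformula   (* arbitrary disjunction; GOr False _ is falsum *)
  | GEx : nat -> gformula -> gformula.

Fixpoint occurs_term (i : nat) (t : term) : Prop :=
  match t with
  | TVar j => i = j
  | TApp f ts => exists k, occurs_term i (ts k)
  end.

Fixpoint free_in (i : nat) (phi : gformula) : Prop :=
  match phi with
  | GTop => False
  | GEq t u => occurs_term i t \/ occurs_term i u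
  | GRel R ts => exists k, occurs_term i (ts k)
  | GAnd p q => free_in i p \/ free_in i q
  | GOr _ ps => exists j, free_in i (ps j)
  | GEx x p => i <> x /\ free_in i p
  end.

(* A geometric sequent  phi |-_{x_0,...,x_{n-1}} psi  in context of the  *)
(* first [sctx] variables.                                              *)
Record sequent := Sequent {
  sctx : nat;
  shyp : gformula;
  sconc : gformula
}.

Definition sequent_wf (s : sequent) : Prop :=
  forall i, free_in i (shyp s) \/ free_in i (sconc s) -> (i < sctx s)%N.

Definition geometric_theory (T : set sequent) : Prop :=
  forall s, T s -> sequent_wf s.

End Syntax.

(* S-indexed structures: underlying set A/~ with A ⊆ S.  Elements [a] are   *)
(* represented by a ∈ A; [a] = [b] iff seqv a b.  Relations and functions   *)
(* are given on representatives and respect ~ ; sfun f as b means          *)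
(* f([as]) = [b].                                                           *)
Section Structures.
Variables (S : Type) (sg : signature).

Record structure := Structure {
  sdom : S -> Prop;
  seqv : S -> S -> Prop;
  srel : forall R : relsym sg, ('I_(rarity R) -> S) -> Prop;
  sfun : forall f : funsym sg, ('I_(farity f) -> S) -> S -> Prop;
  seqv_dom : forall a b, seqv a b -> sdom a;
  seqv_refl : forall a, sdom a -> seqv a a;
  seqv_sym : forall a b, seqv a b -> seqv b a;
  seqv_trans : forall a b c, seqv a b -> seqv b c -> seqv a c;
  srel_dom : forall R xs, srel R xs -> forall k, sdom (xs k);
  srel_resp : forall R xs ys, (forall k, seqv (xs k) (ys k)) ->
                srel R xs -> srel R ys;
  sfun_dom : forall f xs b, sfun f xs b -> (forall k, sdom (xs k)) /\ sdom b;
  sfun_resp : forall f xs ys b c, (forall k, seqv (xs k) (ys k)) -> seqv b c ->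
                sfun f xs b -> sfun f ys c;
  sfun_functional : forall f xs b c, sfun f xs b -> sfun f xs c -> seqv b c;
  sfun_total : forall f xs, (forall k, sdom (xs k)) -> exists b, sfun f xs b
}.

(* Isomorphisms f : M -> N, given by their graph on representatives:    *)
(* imap a b  means  [a] ∈ M, [b] ∈ N and f([a]) = [b].                  *)
Record iso := Iso {
  isrc : structure;
  itgt : structure;
  imap : S -> S -> Prop;
  imap_dom : forall a b, imap a b -> sdom isrc a /\ sdom itgt b;
  imap_resp : forall a a' b b', seqv isrc a a' -> seqv itgt b b' ->
                imap a b -> imap a' b';
  imap_functional : forall a b b', imap a b -> imap a b' -> seqv itgt b b';
  imap_total : forall a, sdom isrc a -> exists b, imap a b;
  imap_injective : forall a a' b, imap a b -> imap a' b -> seqv isrc a a';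
  imap_surjective : forall b, sdom itgt b -> exists a, imap a b;
  imap_rel : forall R xs ys, (forall k, imap (xs k) (ys k)) ->
               (srel isrc R xs <-> srel itgt R ys);
  imap_fun : forall f xs ys a b, (forall k, imap (xs k) (ys k)) -> imap a b ->
               sfun isrc f xs a -> sfun itgt f ys b
}.

Section Semantics.
Variables (M : structure) (v : nat -> S).

Fixpoint teval (t : term sg) (b : S) : Prop :=
  match t with
  | TVar i => seqv M (v i) b
  | TApp f ts => exists xs : 'I_(farity f) -> S,
                   (forall k, teval (ts k) (xs k)) /\ sfun M f xs b
  end.
End Semantics.

Definition update (v : nat -> S) (x : nat) (a : S) : nat -> S :=
  fun i => if i == x then a else v i.

Fixpoint sat (M : structure) (v : nat -> S) (phi : gformula sg) : Prop :=
  match phi with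
  | GTop => True
  | GEq t u => exists b, teval M v t b /\ teval M v u b
  | GRel R ts => exists xs, (forall k, teval M v (ts k) (xs k)) /\ srel M R xs
  | GAnd p q => sat M v p /\ sat M v q
  | GOr _ ps => exists j, sat M v (ps j)
  | GEx x p => exists a, sdom M a /\ sat M (update v x a) p
  end.

Definition sat_sequent (M : structure) (s : sequent sg) : Prop :=
  forall v : nat -> S, (forall i, (i < sctx s)%N -> sdom M (v i)) ->
    sat M v (shyp s) -> sat M v (sconc s).

Definition models (T : set (sequent sg)) : set structure :=
  [set M | forall s, T s -> sat_sequent M s].

Definition isos (T : set (sequent sg)) : set iso :=
  [set f | models T (isrc f) /\ models T (itgt f)].

Definition M_subbase : set (set structure) :=
  [set U | (exists a, U = [set M | sdom M a])
        \/ (exists R xs, U = [set M | srel M R xs])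
        \/ (exists a b, U = [set M | seqv M a b])
        \/ (exists f xs b, U = [set M | sfun M f xs b])].

End Structures.

Arguments M_subbase {S sg}.

HB.instance Definition _ (S : Type) (sg : signature) :=
  gen_eqMixin (structure S sg).
HB.instance Definition _ (S : Type) (sg : signature) :=
  gen_choiceMixin (structure S sg).
HB.instance Definition _ (S : Type) (sg : signature) :=
  @isSubBaseTopological.Build (structure S sg) (set (structure S sg))
    M_subbase id.

Definition I_subbase (S : Type) (sg : signature) : set (set (iso S sg)) :=
  [set U | (exists V : set (structure S sg), open V /\ U = (@isrc S sg) @^-1` V)
        \/ (exists V : set (structure S sg), open V /\ U = (@itgt S sg) @^-1` V)
        \/ (exists a b : S, U = [set f | imap f a b])].

HB.instance Definition _ (S : Type) (sg : signature) :=
  gen_eqMixin (iso S sg).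
HB.instance Definition _ (S : Type) (sg : signature) :=
  gen_choiceMixin (iso S sg).
HB.instance Definition _ (S : Type) (sg : signature) :=
  @isSubBaseTopological.Build (iso S sg) (set (iso S sg))
    (@I_subbase S sg) id.

Section GroupoidMaps.
Variables (S : Type) (sg : signature).

(* Pick the (unique) isomorphism with a prescribed domain, codomain and graph, *)
(* if it exists; otherwise return a default.                                  *)
Definition pick_iso (P : iso S sg -> Prop) (dflt : iso S sg) : iso S sg :=
  match pselect (exists h, P h) with
  | left H => projT1 (cid H)
  | right _ => dflt
  end.

(* composition m(g, f) = g ∘ f, defined on pairs with d g = c f *)
Definition iso_comp (p : iso S sg * iso S sg) : iso S sg :=
  pick_iso (fun h => isrc h = isrc p.2 /\ itgt h = itgt p.1 /\
     forall a c, imap h a c <-> exists b, imap p.2 a b /\ imap p.1 b c) p.1.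

Section IdIso.
Variable M : structure S sg.
Local Lemma sy a b : seqv M a b -> seqv M b a.
Proof. exact: (@seqv_sym S sg M a b). Qed.
Local Lemma tr a b c : seqv M a b -> seqv M b c -> seqv M a c.
Proof. exact: (@seqv_trans S sg M a b c). Qed.
Arguments sy {a b}.
Arguments tr {a b c}.

Lemma id_dom a b : seqv M a b -> sdom M a /\ sdom M b.
Proof.
move=> h; split; first exact: (@seqv_dom S sg M a b h).
exact: (@seqv_dom S sg M b a (sy h)).
Qed.
Lemma id_resp a a' b b' : seqv M a a' -> seqv M b b' -> seqv M a b -> seqv M a' b'.
Proof. by move=> h1 h2 h3; apply: tr h2; apply: tr h3; apply: sy. Qed.
Lemma id_functional a b b' : seqv M a b -> seqv M a b' -> seqv M b b'.
Proof. by move=> h1 h2; apply: tr h2; apply: sy. Qed.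
Lemma id_total a : sdom M a -> exists b, seqv M a b.
Proof. by move=> h; exists a; exact: (@seqv_refl S sg M _ h). Qed.
Lemma id_injective a a' b : seqv M a b -> seqv M a' b -> seqv M a a'.
Proof. by move=> h1 h2; apply: tr h1 _; apply: sy. Qed.
Lemma id_surjective b : sdom M b -> exists a, seqv M a b.
Proof. by move=> h; exists b; exact: (@seqv_refl S sg M _ h). Qed.
Lemma id_rel R xs ys : (forall k, seqv M (xs k) (ys k)) ->
  (srel M R xs <-> srel M R ys).
Proof.
move=> h; split=> H.
  exact: (@srel_resp S sg M R xs ys h H).
apply: (@srel_resp S sg M R ys xs _ H) => k; exact: sy.
Qed.
Lemma id_fun f xs ys a b : (forall k, seqv M (xs k) (ys k)) -> seqv M a b ->
  sfun M f xs a -> sfun M f ys b.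
Proof. by move=> h1 h2; apply: (@sfun_resp S sg M). Qed.

Definition iso_id : iso S sg :=
  @Iso S sg M M (seqv M) id_dom id_resp id_functional id_total id_injective
    id_surjective id_rel id_fun.
End IdIso.

Definition iso_inv (f : iso S sg) : iso S sg :=
  pick_iso (fun h => isrc h = itgt f /\ itgt h = isrc f /\
     forall a b, imap h a b <-> imap f b a) f.

Definition composable (T : set (sequent sg)) : set (iso S sg * iso S sg) :=
  [set p | isos T p.1 /\ isos T p.2 /\ isrc p.1 = itgt p.2].

End GroupoidMaps.

(* Main.v *)
Require Import Defs.
From HB Require Import structures.
From mathcomp Require Import all_boot all_classical all_reals.
From mathcomp Require Import topology.
From mathcomp Require Import finmap.
Local Open Scope classical_set_scope.

Lemma contM (S : Type) (sg : signature) (X : topologicalType) (f : X -> structure S sg) :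
  (forall U, M_subbase U -> forall x, U (f x) -> nbhs x (f @^-1` U)) -> continuous f.
Proof.
move=> H x W /=. rewrite /nbhs /=. move=> [B [oB Bfx BW]].
move: oB. move=> [D' D'sub DB].
rewrite -DB in Bfx BW.
case: Bfx => i D'i ifx.
have [E Esub Ei] : exists2 E : {fset set (structure S sg)},
   {subset E <= M_subbase} & \bigcap_(j in [set` E]) j = (i : set (structure S sg)).
  case: (D'sub i D'i) => E E1 E2; by exists E.
have HF : nbhs x (\bigcap_(j in [set` E]) (f @^-1` j)).
  apply: filter_bigI => j jE.
  apply: H; first by move/Esub: jE; rewrite in_setE.
  by move: ifx; rewrite /= -Ei; apply.
apply: filterS HF.
move=> y Hy; apply: BW; exists i => //=; rewrite -Ei => j Ej; exact: Hy.
Qed.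

Lemma contI (S : Type) (sg : signature) (X : topologicalType) (f : X -> iso S sg) :
  (forall U, I_subbase U -> forall x, U (f x) -> nbhs x (f @^-1` U)) -> continuous f.
Proof.
move=> H x W /=. rewrite /nbhs /=. move=> [B [oB Bfx BW]].
move: oB. move=> [D' D'sub DB].
rewrite -DB in Bfx BW.
case: Bfx => i D'i ifx.
have [E Esub Ei] : exists2 E : {fset set (iso S sg)},
   {subset E <= @I_subbase S sg} & \bigcap_(j in [set` E]) j = (i : set (iso S sg)).
  case: (D'sub i D'i) => E E1 E2; by exists E.
have HF : nbhs x (\bigcap_(j in [set` E]) (f @^-1` j)).
  apply: filter_bigI => j jE.
  apply: H; first by move/Esub: jE; rewrite in_setE.
  by move: ifx; rewrite /= -Ei; apply.
apply: filterS HF.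
move=> y Hy; apply: BW; exists i => //=; rewrite -Ei => j Ej; exact: Hy.
Qed.

Lemma openM (S : Type) (sg : signature) (U : set (structure S sg)) :
  M_subbase U -> open U.
Proof.
move=> HU; rewrite /open /=.
exists [set U].
  move=> _ ->; exact: finI_from1.
by rewrite bigcup_set1.
Qed.

Lemma openI (S : Type) (sg : signature) (U : set (iso S sg)) :
  I_subbase U -> open U.
Proof.
move=> HU; rewrite /open /=.
exists [set U].
  move=> _ ->; exact: finI_from1.
by rewrite bigcup_set1.
Qed.

Lemma nbhs_open' (X : topologicalType) (A : set X) x : open A -> A x -> nbhs x A.
Proof. by move=> oA Ax; apply: open_nbhs_nbhs; split. Qed.

Lemma inv_exists (S : Type) (sg : signature) (f : iso S sg) :
  exists h : iso S sg, isrc h = itgt f /\ itgt h = isrc f /\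
     forall a b, imap h a b <-> imap f b a.
Proof.
unshelve eexists (@Iso S sg (itgt f) (isrc f) (fun a b => imap f b a) _ _ _ _ _ _ _ _).
- by move=> a b /(imap_dom f) [].
- by move=> a a' b b' H1 H2 H3; exact: (@imap_resp _ _ f _ _ _ _ H2 H1 H3).
- by move=> a b b' H1 H2; exact: (@imap_injective _ _ f _ _ _ H1 H2).
- by move=> a Ha; have [b Hb] := imap_surjective f a Ha; exists b.
- by move=> a a' b H1 H2; exact: (@imap_functional _ _ f _ _ _ H1 H2).
- by move=> b Hb; have [a Ha] := imap_total f b Hb; exists a.
- by move=> R xs ys Hk; split=> H; apply/(imap_rel f R ys xs Hk).
- move=> F xs ys a b Hk Hab Hs.
  have [c Hc] := sfun_total (isrc f) F ys (fun k => (imap_dom f _ _ (Hk k)).1).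
  have [c' Hc'] := imap_total f c (sfun_dom _ _ _ _ Hc).2.
  have H1 := imap_fun f F ys xs c c' Hk Hc' Hc.
  have H2 := sfun_functional _ _ _ _ _ H1 Hs.
  have H3 : imap f c a by exact: (@imap_resp _ _ f _ _ _ _ (seqv_refl _ _ (sfun_dom _ _ _ _ Hc).2) H2 Hc').
  have H4 := imap_injective f c b a H3 Hab.
  apply: (sfun_resp _ _ _ _ _ _ _ H4 Hc) => k.
  by apply: seqv_refl; exact: (imap_dom f _ _ (Hk k)).1.
- done.
Qed.

Lemma comp_exists (S : Type) (sg : signature) (g f : iso S sg) :
  isrc g = itgt f ->
  exists h : iso S sg, isrc h = isrc f /\ itgt h = itgt g /\
     forall a c, imap h a c <-> exists b, imap f a b /\ imap g b c.
Proof.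
case: g => N P mg gd gr gf gt gi gs grel gfun /= H; subst N.
have fd := imap_dom f.
unshelve eexists (@Iso S sg (isrc f) P (fun a c => exists b, imap f a b /\ mg b c) _ _ _ _ _ _ _ _).
- by move=> a c [b [H1 H2]]; split; [exact: (fd _ _ H1).1 | exact: (gd _ _ H2).2].
- move=> a a' c c' Ha Hc [b [H1 H2]]; exists b; split.
    exact: (@imap_resp _ _ f _ _ _ _ Ha (seqv_refl _ _ (fd _ _ H1).2) H1).
  exact: (gr _ _ _ _ (seqv_refl _ _ (gd _ _ H2).1) Hc H2).
- move=> a c c' [b [H1 H2]] [b' [H1' H2']].
  have bb' := imap_functional f a b b' H1 H1'.
  apply: (gf b' c c' _ H2').
  exact: (gr _ _ _ _ bb' (seqv_refl _ _ (gd _ _ H2).2) H2).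
- move=> a Ha; have [b Hb] := imap_total f a Ha.
  have [c Hc] := gt b (fd _ _ Hb).2.
  by exists c, b.
- move=> a a' c [b [H1 H2]] [b' [H1' H2']].
  have bb' := gi b b' c H2 H2'.
  apply: (imap_injective f a a' b H1).
  exact: (@imap_resp _ _ f _ _ _ _ (seqv_refl _ _ (fd _ _ H1').1) (seqv_sym _ _ _ bb') H1').
- move=> c Hc; have [b Hb] := gs c Hc.
  have [a Ha] := imap_surjective f b (gd _ _ Hb).1.
  by exists a, b.
- move=> R xs ys Hk.
  have [bs Hbs] := choice Hk.
  rewrite (imap_rel f R xs bs (fun k => (Hbs k).1)).
  exact: (grel R bs ys (fun k => (Hbs k).2)).
- move=> F xs ys a c Hk [b [H1 H2]] Hs.
  have [bs Hbs] := choice Hk.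
  have H3 := imap_fun f F xs bs a b (fun k => (Hbs k).1) H1 Hs.
  exact: (gfun F bs ys b c (fun k => (Hbs k).2) H2 H3).
- done.
Qed.

Lemma comp_spec (S : Type) (sg : signature) (p : iso S sg * iso S sg) :
  isrc p.1 = itgt p.2 ->
  isrc (iso_comp p) = isrc p.2 /\ itgt (iso_comp p) = itgt p.1 /\
     forall a c, imap (iso_comp p) a c <-> exists b, imap p.2 a b /\ imap p.1 b c.
Proof.
move=> H; rewrite /iso_comp /pick_iso; case: pselect => [Hx|Hn].
  exact: (projT2 (cid Hx)).
by exfalso; apply: Hn; apply: comp_exists.
Qed.

Lemma inv_spec (S : Type) (sg : signature) (f : iso S sg) :
  isrc (iso_inv f) = itgt f /\ itgt (iso_inv f) = isrc f /\
     forall a b, imap (iso_inv f) a b <-> imap f b a.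
Proof.
rewrite /iso_inv /pick_iso; case: pselect => [Hx|Hn].
  exact: (projT2 (cid Hx)).
by exfalso; apply: Hn; apply: inv_exists.
Qed.

Lemma cont_isrc (S : Type) (sg : signature) : continuous (@isrc S sg).
Proof.
apply: contM => U HU g Ug; apply: nbhs_open' => //.
apply: openI; left; exists U; split => //; exact: openM.
Qed.

Lemma cont_itgt (S : Type) (sg : signature) : continuous (@itgt S sg).
Proof.
apply: contM => U HU g Ug; apply: nbhs_open' => //.
apply: openI; right; left; exists U; split => //; exact: openM.
Qed.

Lemma cont_id (S : Type) (sg : signature) : continuous (@iso_id S sg).
Proof.
apply: contI => U [[V [oV ->]] | [[V [oV ->]] | [a [b ->]]]] M HM;
  apply: nbhs_open' => //.
apply: openM; right; right; left; exists a, b; reflexivity.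
Qed.

Lemma cont_inv (S : Type) (sg : signature) : continuous (@iso_inv S sg).
Proof.
apply: contI => U [[V [oV ->]] | [[V [oV ->]] | [a [b ->]]]] f Hf.
- have -> : (@iso_inv S sg) @^-1` ((@isrc S sg) @^-1` V) = (@itgt S sg) @^-1` V.
    by apply/seteqP; split => g /=; rewrite (@inv_spec _ _ g).1.
  apply: nbhs_open'; last by move: Hf; rewrite /= (@inv_spec _ _ f).1.
  by apply: openI; right; left; exists V.
- have -> : (@iso_inv S sg) @^-1` ((@itgt S sg) @^-1` V) = (@isrc S sg) @^-1` V.
    by apply/seteqP; split => g /=; rewrite (@inv_spec _ _ g).2.1.
  apply: nbhs_open'; last by move: Hf; rewrite /= (@inv_spec _ _ f).2.1.
  by apply: openI; left; exists V.
- have -> : (@iso_inv S sg) @^-1` [set h | imap h a b] = [set h | imap h b a].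
    by apply/seteqP; split => g /= /(@inv_spec _ _ g).2.2.
  apply: nbhs_open'; last by move: Hf => /= /(@inv_spec _ _ f).2.2.
  by apply: openI; right; right; exists b, a.
Qed.

Lemma cont_comp (S : Type) (sg : signature) (T : set (sequent sg)) :
  {within composable T, continuous (@iso_comp S sg)}.
Proof.
apply: contI => U HU p Up.
case: (nbhs_subspaceP (composable T) p) => Ap; last first.
  by move=> q /= ->.
have [h1 [h2 h3]] := @comp_spec _ _ p Ap.2.2.
rewrite /within /=.
case: HU => [[V [oV EU]] | [[V [oV EU]] | [a [c EU]]]]; subst U.
- exists (setT, (@isrc S sg) @^-1` V).
    split; first exact: filterT.
    apply: nbhs_open'; first by apply: openI; left; exists V.
    by move: Up; rewrite /= h1.
  move=> q [_ Hq] Aq /=.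
  by rewrite (@comp_spec _ _ q Aq.2.2).1.
- exists ((@itgt S sg) @^-1` V, setT).
    split; last exact: filterT.
    apply: nbhs_open'; first by apply: openI; right; left; exists V.
    by move: Up; rewrite /= h2.
  move=> q [Hq _] Aq /=.
  by rewrite (@comp_spec _ _ q Aq.2.2).2.1.
- have [b [Hb1 Hb2]] := (h3 a c).1 Up.
  exists ([set g | imap g b c], [set f | imap f a b]).
    split; apply: nbhs_open' => //; apply: openI; right; right; by [exists b, c | exists a, b].
  move=> q [Hq1 Hq2] Aq /=.
  by apply/((@comp_spec _ _ q Aq.2.2).2.2 a c); exists b.
Qed.

Theorem lemma2p5 (sg : signature) (kappa S : Type)
  (kappa_inf : card_geq kappa nat)
  (kappa_sig : card_geq kappa (funsym sg + relsym sg)%type)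
  (S_kappa : card_geq S kappa)
  (T : set (sequent sg)) (HT : geometric_theory T) :
  (* d *)
  ((@isrc S sg) @` isos T `<=` models T /\ {within isos T, continuous (@isrc S sg)}) /\
  (* c *)
  ((@itgt S sg) @` isos T `<=` models T /\ {within isos T, continuous (@itgt S sg)}) /\
  (* m *)
  ((@iso_comp S sg) @` composable T `<=` isos T /\
     {within composable T, continuous (@iso_comp S sg)}) /\
  (* e *)
  ((@iso_id S sg) @` models T `<=` isos T /\
     {within models T, continuous (@iso_id S sg)}) /\
  (* i *)
  ((@iso_inv S sg) @` isos T `<=` isos T /\
     {within isos T, continuous (@iso_inv S sg)}).
Proof.
split; first by split; [move=> _ [g [H1 H2] <-] | apply: continuous_subspaceT; exact: cont_isrc].
split; first by split; [move=> _ [g [H1 H2] <-] | apply: continuous_subspaceT; exact: cont_itgt].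
split.
  split; last exact: cont_comp.
  move=> _ [p [Hp1 [Hp2 Hp3]] <-].
  have [h1 [h2 _]] := @comp_spec _ _ p Hp3.
  by rewrite /isos /= h1 h2; split; [exact: Hp2.1 | exact: Hp1.2].
split.
  by split; [move=> _ [M HM <-] | apply: continuous_subspaceT; exact: cont_id].
split; last by apply: continuous_subspaceT; exact: cont_inv.
move=> _ [f [Hf1 Hf2] <-].
have [h1 [h2 _]] := @inv_spec _ _ f.
by rewrite /isos /= h1 h2.
Qed.
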